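(* Let $\tau_0,\tau_1,\tau_2>0$. For any $0<\alpha<\beta$, we have $\mathcal{B}_\alpha\subset\mathcal{B}_\beta$.
   Context: $\mathcal{C}=\{z\in\mathbb{C}:\Re z\ge(1+\tau_0)|\Im z|\}\cap\{z\in\mathbb{C}:\tau_1<\Re z<\tau_2\}$; for $a=(a_1,\dots,a_n)\in\mathbb{R}^n$, $p_a(z)=z^n+a_1z^{n-1}+\dots+a_n$; and for $\alpha>0$, $\mathcal{B}_\alpha=\{a\in\mathbb{R}^n:\ p_a(z)/z^n\in\mathcal{C}\text{ for all } z \text{ with } |z|=\alpha\}$. *)

(* Defs.v *)
From HB Require Import structures.
From mathcomp Require Import all_boot all_order all_algebra.
From mathcomp Require Import complex reals.
Set Implicit Arguments. Unset Strict Implicit. Unset Printing Implicit Defensive.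
Import Order.TTheory GRing.Theory Num.Theory.
Local Open Scope ring_scope.

(* Complex numbers: R[i] = complex R over the reals R : realType
   (Re, Im the real/imaginary parts, `|z| the modulus, a real element of R[i]). *)

Definition regionC (R : realType) (tau0 tau1 tau2 : R) (z : R[i]) : Prop :=
  (1 + tau0) * `|complex.Im z| <= complex.Re z /\ tau1 < complex.Re z /\ complex.Re z < tau2.

(* p_a(z) = z^n + a_1 z^(n-1) + ... + a_n, with a_{i+1} = a i for i : 'I_n. *)
Definition p_a (R : realType) (n : nat) (a : 'I_n -> R) (z : R[i]) : R[i] :=
  z ^+ n + \sum_(i < n) (a i)%:C%C * z ^+ (n - i.+1).

Definition B_alpha (R : realType) (tau0 tau1 tau2 : R) (n : nat) (alpha : R)
  : ('I_n -> R) -> Prop := fun a =>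
  forall z : R[i], `|z| = alpha%:C%C -> regionC tau0 tau1 tau2 (p_a a z / z ^+ n).

(* Main.v *)
Require Import Defs.
From HB Require Import structures.
From mathcomp Require Import all_boot all_order all_algebra.
From mathcomp Require Import all_field all_solvable.
From mathcomp Require Import complex reals.
From mathcomp Require Import zify.
From mathcomp.algebra_tactics Require Import ring lra.
Import Order.TTheory GRing.Theory Num.Theory.
Local Open Scope ring_scope.

Section Core.
Variable R : realType.
Local Notation C := R[i].

Lemma prim_exists (m : nat) : (0 < m)%N -> exists z : C, m.-primitive_root z.
Proof.
move=> m_gt0.
pose p : {poly C} := 'X^m - 1; have [r Dp] := closed_field_poly_normal p.
rewrite (monicP _) ?monicXnsubC // scale1r in Dp.
have rn1: all m.-unity_root r by apply/allP=> z; rewrite -root_prod_XsubC -Dp.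
have sz_r: (m < (size r).+1)%N.
  by rewrite -(size_prod_XsubC r id) -Dp size_XnsubC.
have [|z _ ?] := hasP (has_prim_root m_gt0 rn1 _ sz_r); last by exists z.
by rewrite -separable_prod_XsubC -Dp separable_Xn_sub_1 // pnatr_eq0 -lt0n.
Qed.

Variable N : nat.
Hypothesis N_gt0 : (0 < N)%N.
Variable eta : C.
Hypothesis eta_prim : (2 * N).-primitive_root eta.

Definition xi (k : nat) : C := eta * (eta ^+ 2) ^+ k.

Lemma etaN : eta ^+ N = -1.
Proof.
have h2 : (eta ^+ N) ^+ 2 = 1 by rewrite -exprM mulnC (prim_expr_order eta_prim).
have hn1 : eta ^+ N != 1.
  rewrite -(expr0 eta) (eq_prim_root_expr eta_prim) mod0n modn_small; first by rewrite -lt0n.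
  lia.
by move/eqP: h2; rewrite sqrf_eq1 (negbTE hn1) /= => /eqP.
Qed.

Lemma xiN k : xi k ^+ N = -1.
Proof.
rewrite /xi exprMn etaN -!exprM.
have -> : (2 * k * N = 2 * N * k)%N by lia.
by rewrite exprM (prim_expr_order eta_prim) expr1n mulr1.
Qed.

Lemma sum_xi (e : nat) :
  \sum_(k < N) xi k ^+ e = if (N %| e)%N then N%:R * eta ^+ e else 0.
Proof.
have -> : \sum_(k < N) xi k ^+ e = eta ^+ e * \sum_(k < N) (eta ^+ (2 * e)) ^+ k.
  rewrite mulr_sumr; apply: eq_bigr => k _.
  by rewrite /xi exprMn -!exprM; congr (_ * _); congr (_ ^+ _); lia.
have E : (eta ^+ (2 * e) == 1) = (N %| e)%N.
  rewrite -(expr0 eta) (eq_prim_root_expr eta_prim) mod0n -/(dvdn _ _).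
  by rewrite dvdn_pmul2l.
case: ifP => hd.
  move: E; rewrite hd => /eqP ->.
  under eq_bigr do rewrite expr1n.
  by rewrite sumr_const card_ord mulrC.
have hne : eta ^+ (2 * e) - 1 != 0 by rewrite subr_eq0 E hd.
have h0 : (eta ^+ (2 * e) - 1) * \sum_(k < N) (eta ^+ (2 * e)) ^+ k = 0.
  rewrite -subrX1 -exprM.
  have -> : (2 * e * N = 2 * N * e)%N by lia.
  by rewrite exprM (prim_expr_order eta_prim) expr1n subrr.
move/eqP: h0; rewrite mulf_eq0 (negbTE hne) /= => /eqP ->.
by rewrite mulr0.
Qed.

Lemma mean_poly (H : {poly C}) :
  (size H <= N)%N -> \sum_(k < N) H.[xi k] = N%:R * H`_0.
Proof.
move=> sH.
under eq_bigr do rewrite (horner_coef_wide _ sH).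
rewrite exchange_big /=.
under eq_bigr => j _ do rewrite -mulr_sumr sum_xi.
rewrite (bigD1 (Ordinal N_gt0)) //= big1.
  by rewrite dvdn0 expr0 mulr1 addr0 mulrC.
move=> j /eqP hj.
have -> : (N %| j)%N = false.
  apply/negP => hd; apply: hj; apply: val_inj => /=.
  case: (posnP (nat_of_ord j)) => [->|jp] //.
  have := dvdn_leq jp hd; have := ltn_ord j; lia.
by rewrite mulr0.
Qed.
End Core.


Section Core2.
Variable R : realType.
Local Notation C := R[i].
Variable N : nat.
Hypothesis N_gt0 : (0 < N)%N.
Variable eta : C.
Hypothesis eta_prim : (2 * N).-primitive_root eta.
Local Notation xi := (@xi R eta).
Let xiN' := @xiN R N N_gt0 eta eta_prim.
Let sum_xi' := @sum_xi R N N_gt0 eta eta_prim.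
Let mean' := @mean_poly R N N_gt0 eta eta_prim.

Lemma xi_neq (x : C) k : 1 + x ^+ N != 0 -> xi k - x != 0.
Proof.
move=> hx; apply/negP; rewrite subr_eq0 => /eqP hk.
move: hx; rewrite -hk xiN' addrN eqxx //.
Qed.

Lemma sum_inv (x : C) : 1 + x ^+ N != 0 ->
  \sum_(k < N) (xi k - x)^-1 = - (N%:R * x ^+ N.-1) / (1 + x ^+ N).
Proof.
move=> hx.
have E k : (xi k - x)^-1 =
    - (\sum_(i < N) xi k ^+ (N.-1 - i) * x ^+ i) / (1 + x ^+ N).
  have hS := subrXX (xi k) x N.
  rewrite xiN' in hS.
  apply: (mulfI (@xi_neq x k hx)); rewrite mulfV ?(@xi_neq x k hx) //.
  rewrite mulrA mulrN -hS.
  have -> : -1 - x ^+ N = - (1 + x ^+ N) by rewrite opprD.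
  by rewrite opprK mulfV.
under eq_bigr do rewrite E.
rewrite -mulr_suml sumrN; congr (- _ / _).
rewrite exchange_big /=.
under eq_bigr => i _ do rewrite -mulr_suml sum_xi'.
have hlt : (N.-1 < N)%N by lia.
rewrite (bigD1 (Ordinal hlt)) //= big1.
  by rewrite subnn dvdn0 expr0 mulr1 addr0 mulrC.
move=> i /eqP hi.
have -> : (N %| N.-1 - i)%N = false.
  apply/negP => hd; apply: hi; apply: val_inj => /=.
  have := ltn_ord i.
  case: (posnP (N.-1 - i)) => [e0|jp]; first lia.
  have := dvdn_leq jp hd; lia.
by rewrite mul0r.
Qed.

Lemma sum_cauchy (H : {poly C}) (x : C) : (size H <= N)%N -> x != 0 ->
  1 + x ^+ N != 0 ->
  \sum_(k < N) xi k * H.[xi k] / (xi k - x) = N%:R * H.[x] / (1 + x ^+ N).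
Proof.
move=> sH x0 hx.
pose p := 'X * H - (x * H.[x])%:P.
have rp : root p x by rewrite /root /p !hornerE subrr.
have [D hD] := factor_theorem _ _ rp.
have sD : (size D <= N)%N.
  have sp : (size p <= (size H).+1)%N.
    apply: leq_trans (size_polyD _ _) _; rewrite size_polyN geq_max; apply/andP; split.
      apply: leq_trans (size_polyMleq _ _) _; by rewrite size_polyX.
    apply: leq_trans (size_polyC_leq1 _) _; lia.
  have [->|D0] := eqVneq D 0; first by rewrite size_poly0.
  move: sp; rewrite hD size_Mmonic ?monicXsubC // size_XsubC addn2 /= ltnS => h; exact: leq_trans h sH.
have E k : xi k * H.[xi k] / (xi k - x) = D.[xi k] + x * H.[x] / (xi k - x).
  have : p.[xi k] = D.[xi k] * (xi k - x) by rewrite hD !hornerE.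
  rewrite /p !hornerE => h.
  apply: (mulIf (@xi_neq x k hx)).
  rewrite mulrDl -!mulrA mulVf ?(@xi_neq x k hx) // !mulr1 -h subrK /xi; ring.
under eq_bigr do rewrite E.
rewrite big_split /= (mean' D sD) -mulr_sumr (@sum_inv x hx).
have D0 : D`_0 = H.[x].
  have : p.[0] = D.[0] * (0 - x) by rewrite hD !hornerE.
  rewrite /p !hornerE horner_coef0 => h.
  by apply: (mulfI x0); apply: oppr_inj; rewrite h mulrN mulrC.
rewrite D0.
have hN : x ^+ N = x * x ^+ N.-1 by rewrite -exprS; congr (_ ^+ _); lia.
apply: (mulIf hx); rewrite mulrDl -!mulrA !mulVf // !mulr1.
rewrite hN; ring.
Qed.
End Core2.


Section Core3.
Variable R : realType.
Local Notation C := R[i].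
Local Notation Re := complex.Re.

Definition nr (z : C) : R := Num.sqrt (Re z ^+ 2 + complex.Im z ^+ 2).

Lemma normE (z : C) : `|z| = (nr z)%:C%C.
Proof. exact: normc_def. Qed.

Lemma ReM (x : R) (y : C) : Re (x%:C%C * y) = x * Re y.
Proof. by case: y => a b /=; simpc. Qed.

Lemma ReN (n : nat) (y : C) : Re (n%:R * y) = n%:R * Re y.
Proof. by rewrite -(rmorph_nat (real_complex R)) ReM. Qed.

Lemma norm_real (s : R) : 0 <= s -> `|s%:C%C| = s%:C%C.
Proof. by move=> hs; rewrite ger0_norm // ler0c. Qed.

Lemma circ_neq (z : C) (s : R) : `|z| = 1 -> 0 <= s -> s != 1 -> z - s%:C%C != 0.
Proof.
move=> hz hs hs1; apply/negP; rewrite subr_eq0 => /eqP hzs.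
move: hz; rewrite hzs norm_real // => /(congr1 (@complex.Re R)) /= h.
by move: hs1; rewrite h eqxx.
Qed.

Lemma P_real (z : C) (t : R) : `|z| = 1 -> 0 < t -> t < 1 ->
  z / (z - t%:C%C) - z / (z - (t^-1)%:C%C) = ((1 - t ^+ 2) / nr (z - t%:C%C) ^+ 2)%:C%C.
Proof.
move=> hz t0 t1.
have z0 : z != 0 by apply/negP => /eqP z0; move: hz; rewrite z0 normr0 => /eqP; rewrite eq_sym oner_eq0.
have n1 : z - t%:C%C != 0 by apply: circ_neq => //; [lra | rewrite lt_eqF].
have n2 : z - (t^-1)%:C%C != 0.
  apply: circ_neq => //; first by rewrite invr_ge0; lra.
  by rewrite gt_eqF // invf_gt1 //.
have hc : z * z^*%C = 1 by rewrite -sqr_normc hz expr1n.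
have cE : z^*%C = z^-1 by rewrite -[z^*%C]mul1r -(mulVf z0) -mulrA hc mulr1.
have n3 : z^-1 - t%:C%C != 0.
  rewrite -cE; apply: circ_neq => //; [by rewrite normcJ | lra | by rewrite lt_eqF].
have t0' : t%:C%C != 0 by rewrite (inj_eq (@complexI R)) gt_eqF.
have hn : ((nr (z - t%:C%C)) ^+ 2)%:C%C = `|z - t%:C%C| ^+ 2 by rewrite normE rmorphXn.
have ht : (1 - t ^+ 2)%:C%C = 1 - t%:C%C ^+ 2 by rewrite rmorphB rmorph1 rmorphXn.
have hd : ((1 - t ^+ 2) / nr (z - t%:C%C) ^+ 2)%:C%C =
    (1 - t ^+ 2)%:C%C / ((nr (z - t%:C%C)) ^+ 2)%:C%C by rewrite fmorph_div.
rewrite hd hn ht sqr_normc.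
have hcj : (z - t%:C%C)^*%C = z^*%C - t%:C%C.
  by case: (z) => a b; rewrite /= ?opprK; simpc.
have hv : (t^-1)%:C%C = (t%:C%C)^-1 by rewrite fmorphV.
rewrite hcj cE hv; rewrite hv in n2.
have h1 : 1 + - t%:C%C * z != 0.
  have -> : 1 + - t%:C%C * z = z * (z^-1 - t%:C%C) by rewrite mulrBr mulfV // mulNr [z * _]mulrC.
  by rewrite mulf_neq0.
have h2 : z * t%:C%C - 1 != 0.
  have -> : z * t%:C%C - 1 = - (1 + - t%:C%C * z) by ring.
  by rewrite oppr_eq0.
field.
by apply/and5P; split.
Qed.

Lemma norm_xi (N : nat) (eta : C) k : (0 < N)%N -> (2 * N).-primitive_root eta ->
  `|@xi R eta k| = 1.
Proof.
move=> N0 ep.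
have he : `|eta| = 1.
  apply/eqP; rewrite -(@pexpr_eq1 _ _ (2 * N)) ?normr_ge0 //; last by lia.
  by rewrite -normrX (prim_expr_order ep) normr1.
by rewrite /xi normrM !normrX he !expr1n mulr1.
Qed.

Lemma sum_Re (I : Type) (r : seq I) (F : I -> C) :
  Re (\sum_(i <- r) F i) = \sum_(i <- r) Re (F i).
Proof. by rewrite raddf_sum. Qed.

Lemma harnack_N (H : {poly C}) (t : R) (N : nat) : (0 < N)%N -> (size H <= N)%N ->
  0 < t -> t < 1 -> (forall z : C, `|z| = 1 -> 0 <= Re H.[z]) ->
  0 <= Re H`_0 /\
  (1 - t) / (1 + t) * Re H`_0 <= Re H.[t%:C%C] - t ^+ N * Re H.[(t^-1)%:C%C].
Proof.
move=> N0 sH t0 t1 hH.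
have [eta ep] : exists eta : C, (2 * N).-primitive_root eta by apply: prim_exists; lia.
pose z := @xi R eta.
have nz k : `|z k| = 1 by apply: norm_xi ep.
have mean := @mean_poly R N N0 eta ep H sH.
have hmean : \sum_(k < N) Re H.[z k] = N%:R * Re H`_0.
  by rewrite -sum_Re mean ReN.
have NR : (0 : R) < N%:R by rewrite ltr0n.
have h0 : 0 <= Re H`_0.
  have : 0 <= \sum_(k < N) Re H.[z k] by apply: sumr_ge0 => k _; exact: hH.
  by rewrite hmean pmulr_rge0.
split => //.
pose k0 := (1 - t) / (1 + t).
have k0_ge0 : 0 <= k0 by rewrite /k0 divr_ge0 //; lra.
pose p k := (1 - t ^+ 2) / nr (z k - t%:C%C) ^+ 2.
have pk k : k0 <= p k.
  have hn : 0 < nr (z k - t%:C%C).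
    have : z k - t%:C%C != 0 by apply: circ_neq => //; [lra | rewrite lt_eqF].
    rewrite -normr_eq0 normE => hne.
    rewrite lt_def; apply/andP; split; last by rewrite /nr sqrtr_ge0.
    by apply/negP => /eqP h; move: hne; rewrite h eqxx.
  have hle : nr (z k - t%:C%C) <= 1 + t.
    have : `|z k - t%:C%C| <= `|z k| + `|t%:C%C| by apply: ler_normB.
    rewrite nz norm_real; last by lra.
    by rewrite normE -(rmorph1 (real_complex R)) -rmorphD lecR.
  rewrite /p /k0 ler_pdivlMr ?exprn_gt0 //.
  have -> : 1 - t ^+ 2 = (1 - t) / (1 + t) * (1 + t) ^+ 2.
    by field; lra.
  apply: ler_wpM2l; first by rewrite divr_ge0 //; lra.
  by rewrite lerXn2r // ?nnegrE; lra.
have key : \sum_(k < N) (p k)%:C%C * H.[z k] =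
   N%:R * H.[t%:C%C] / (1 + t%:C%C ^+ N) - N%:R * H.[(t^-1)%:C%C] / (1 + (t^-1)%:C%C ^+ N).
  rewrite -!(@sum_cauchy R N N0 eta ep H) //.
  - rewrite -sumrB; apply: eq_bigr => k _.
    rewrite -P_real // mulrBl; congr (_ - _); rewrite mulrAC //.
  - by rewrite (inj_eq (@complexI R)) invr_eq0 gt_eqF.
  - rewrite -rmorphXn -(rmorph1 (real_complex R)) -rmorphD (inj_eq (@complexI R)).
    by rewrite gt_eqF // ltr_wpDr // exprn_ge0 // invr_ge0; lra.
  - by rewrite (inj_eq (@complexI R)) gt_eqF.
  - rewrite -rmorphXn -(rmorph1 (real_complex R)) -rmorphD (inj_eq (@complexI R)).
    by rewrite gt_eqF // ltr_wpDr // exprn_ge0 //; lra.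
pose T := t ^+ N.
have T0 : 0 < T by rewrite exprn_gt0.
pose A := N%:R / (1 + T).
pose B := N%:R / (1 + (t^-1) ^+ N).
have e1 : N%:R * H.[t%:C%C] / (1 + t%:C%C ^+ N) = A%:C%C * H.[t%:C%C].
  by rewrite /A /T fmorph_div rmorphD rmorphXn rmorph_nat rmorph1 mulrAC.
have e2 : N%:R * H.[(t^-1)%:C%C] / (1 + (t^-1)%:C%C ^+ N) = B%:C%C * H.[(t^-1)%:C%C].
  by rewrite /B fmorph_div rmorphD rmorphXn rmorph_nat rmorph1 mulrAC.
rewrite e1 e2 in key.
have := congr1 (@complex.Re R) key.
rewrite sum_Re raddfB /= !ReM => hk.
have hB : B = A * T.
  rewrite /B /A /T exprVn; field.
  by rewrite !gt_eqF // ltr_wpDr // ltW.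
have A0 : 0 < A by rewrite /A divr_gt0 //; lra.
have AN : A <= N%:R by rewrite /A ler_pdivrMr; [nra | lra].
have hlow : k0 * (N%:R * Re H`_0) <= \sum_(k < N) p k * Re H.[z k].
  rewrite -hmean mulr_sumr; apply: ler_sum => k _.
  by apply: ler_wpM2r; [exact: hH | exact: pk].
rewrite -(ler_pM2l A0).
have hX : A * (Re H.[t%:C%C] - T * Re H.[(t^-1)%:C%C]) =
   A * Re H.[t%:C%C] - B * Re H.[(t^-1)%:C%C] by rewrite hB; ring.
have hk' : \sum_(k < N) p k * Re H.[z k] = A * Re H.[t%:C%C] - B * Re H.[(t^-1)%:C%C].
  by rewrite -hk; apply: eq_bigr => k _; rewrite ReM.
rewrite hX -hk'; apply: le_trans hlow.
have : 0 <= k0 * Re H`_0 by rewrite mulr_ge0.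
rewrite -/k0 [k0 * (_ * _)]mulrCA => hk0; by apply: ler_wpM2r.
Qed.

Lemma bernoulli (x : R) (n : nat) : 0 <= x -> 1 + n%:R * x <= (1 + x) ^+ n.
Proof.
move=> x0; elim: n => [|n IH]; first by rewrite mul0r addr0 expr0.
rewrite exprSr -natr1.
have h1 : 0 <= n%:R * x by rewrite mulr_ge0.
nra.
Qed.

Lemma harnack (H : {poly C}) (t : R) :
  0 < t -> t < 1 -> (forall z : C, `|z| = 1 -> 0 <= Re H.[z]) ->
  0 <= Re H`_0 /\ (1 - t) / (1 + t) * Re H`_0 <= Re H.[t%:C%C].
Proof.
move=> t0 t1 hH.
have [h0 _] := harnack_N H t (size H).+1 (ltn0Sn _) (leqnSn _) t0 t1 hH.
split => //.
set k := (1 - t) / (1 + t) * Re H`_0.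
set X := Re H.[t%:C%C].
set Y := Re H.[(t^-1)%:C%C].
rewrite leNgt; apply/negP => hlt.
pose de := k - X.
have de0 : 0 < de by rewrite /de subr_gt0.
pose u := t^-1.
pose d := u - 1.
have u1 : 1 < u by rewrite /u invf_gt1.
have d0 : 0 < d by rewrite /d subr_gt0.
pose M := `|Y|.
have M0 : 0 <= M by rewrite normr_ge0.
pose K := Num.Def.archi_bound (M / (d * de)).
have hK : M / (d * de) < K%:R.
  by apply: archi_boundP; rewrite divr_ge0 // mulr_ge0 // ltW.
pose N := (size H + K).+1.
have sHN : (size H <= N)%N by rewrite /N; lia.
have [_ hN] := harnack_N H t N (ltn0Sn _) sHN t0 t1 hH.
have KN : (K%:R : R) <= N%:R by rewrite ler_nat /N; lia.
have hM : M < N%:R * d * de.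
  have := lt_le_trans hK KN.
  by rewrite ltr_pdivrMr ?mulr_gt0 // mulrA.
have hb := @bernoulli d N (ltW d0).
have ud : 1 + d = u by rewrite /d addrC subrK.
rewrite ud in hb.
have tu : t ^+ N * u ^+ N = 1 by rewrite -exprMn /u mulfV ?gt_eqF // expr1n.
have tN0 : 0 <= t ^+ N by rewrite exprn_ge0 // ltW.
have hY : - Y <= M by rewrite /M -normrN ler_norm.
have h1 : de <= t ^+ N * M.
  rewrite /de; have : - (t ^+ N * Y) <= t ^+ N * M by rewrite -mulrN ler_wpM2l.
  rewrite -/k -/X -/Y in hN; lra.
have uN0 : 0 <= u ^+ N by rewrite exprn_ge0 //; lra.
have h2 : de * u ^+ N <= M.
  have := ler_wpM2r uN0 h1.
  by rewrite mulrAC tu mul1r.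
have h3 : N%:R * d * de <= de * u ^+ N.
  rewrite mulrC; apply: ler_wpM2l; first exact: ltW.
  lra.
lra.
Qed.
End Core3.


Section Core4.
Variable R : realType.
Local Notation C := R[i].
Local Notation Re := complex.Re.

Lemma mean_strict (G : {poly C}) :
  (forall z : C, `|z| = 1 -> 0 < Re G.[z]) -> 0 < Re G`_0.
Proof.
move=> hG.
pose N := (size G).+1.
have N0 : (0 < N)%N by [].
have [eta ep] : exists eta : C, (2 * N).-primitive_root eta by apply: prim_exists; lia.
have := @mean_poly R N N0 eta ep G (leqnSn _).
move/(congr1 (@complex.Re R)); rewrite sum_Re ReN => hm.
have : 0 < \sum_(k < N) Re G.[@xi R eta k].
  rewrite (bigD1 (Ordinal N0)) //=; apply: ltr_wpDr.
    by apply: sumr_ge0 => k _; apply: ltW; apply: hG; exact: (@norm_xi R N eta _ N0 ep).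
  by apply: hG; exact: (@norm_xi R N eta _ N0 ep).
by rewrite hm pmulr_rgt0 // ltr0n.
Qed.

Lemma minprinc (H : {poly C}) (rho r : R) (w : C) :
  0 < r -> r < rho -> `|w| = r%:C%C ->
  (forall z : C, `|z| = rho%:C%C -> 0 <= Re H.[z]) ->
  (0 <= Re H.[w]) /\
  ((forall z : C, `|z| = rho%:C%C -> 0 < Re H.[z]) -> 0 < Re H.[w]).
Proof.
move=> r0 rr hw hH.
have rho0 : 0 < rho by lra.
pose lam := (rho / r)%:C%C * w.
pose G := H \Po (lam *: 'X).
have GE x : G.[x] = H.[lam * x] by rewrite /G horner_comp !hornerE.
have nl x : `|x| = 1 -> `|lam * x| = rho%:C%C.
  move=> hx; rewrite !normrM hx mulr1 hw norm_real; last by rewrite divr_ge0 // ltW.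
  by rewrite -rmorphM mulfVK // gt_eqF.
pose t := r / rho.
have t0 : 0 < t by rewrite divr_gt0.
have t1 : t < 1 by rewrite ltr_pdivrMr // mul1r.
have Gt : G.[t%:C%C] = H.[w].
  have e : rho / r * (r / rho) = 1 by field; rewrite !gt_eqF.
  by rewrite GE /lam /t mulrAC -rmorphM e rmorph1 mul1r.
have G0 : G`_0 = H.[0] by rewrite -horner_coef0 GE mulr0.
have hG : forall z : C, `|z| = 1 -> 0 <= Re G.[z].
  by move=> z hz; rewrite GE; apply: hH; apply: nl.
have [g0 hk] := @harnack R G t t0 t1 hG.
rewrite Gt in hk.
have k0 : 0 < (1 - t) / (1 + t) by rewrite divr_gt0 //; lra.
split; first by apply: le_trans hk; rewrite mulr_ge0 // ltW.
move=> hs.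
have : 0 < Re G`_0.
  by apply: mean_strict => z hz; rewrite GE; apply: hs; apply: nl.
move=> gp; apply: lt_le_trans hk; by rewrite mulr_gt0.
Qed.
End Core4.


Section Core5.
Variable R : realType.
Local Notation C := R[i].
Local Notation Re := complex.Re.
Local Notation Im := complex.Im.

Lemma ReMC (u : C) (x y : R) : Re (u * (x +i* y)%C) = x * Re u - y * Im u.
Proof. by case: u => a b /=; ring. Qed.

Lemma transfer (tau0 tau1 tau2 : R) (Q : {poly C}) (rho r : R) (w : C) :
  0 < tau0 -> 0 < r -> r < rho -> `|w| = r%:C%C ->
  (forall z : C, `|z| = rho%:C%C -> regionC tau0 tau1 tau2 Q.[z]) ->
  regionC tau0 tau1 tau2 Q.[w].
Proof.
move=> t0 r0 rr hw hQ.
pose k := 1 + tau0.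
have k0 : 0 < k by rewrite /k; lra.
pose H1 := Q * ((1 +i* k)%C)%:P.
pose H2 := Q * ((1 +i* (- k))%C)%:P.
pose H3 := Q - (tau1%:C%C)%:P.
pose H4 := (tau2%:C%C)%:P - Q.
have E1 x : Re H1.[x] = Re Q.[x] - k * Im Q.[x] by rewrite /H1 !hornerE ReMC mul1r.
have E2 x : Re H2.[x] = Re Q.[x] + k * Im Q.[x] by rewrite /H2 !hornerE ReMC mul1r mulNr opprK.
have E3 x : Re H3.[x] = Re Q.[x] - tau1 by rewrite /H3 !hornerE raddfB.
have E4 x : Re H4.[x] = tau2 - Re Q.[x] by rewrite /H4 !hornerE raddfB.
have reg z : `|z| = rho%:C%C ->
    [/\ 0 <= Re H1.[z], 0 <= Re H2.[z], 0 < Re H3.[z] & 0 < Re H4.[z]].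
  move=> hz; have [h1 [h2 h3]] := hQ z hz.
  rewrite E1 E2 E3 E4 -/k in h1 *.
  have hn : Im Q.[z] <= `|Im Q.[z]| by apply: ler_norm.
  have hn' : - Im Q.[z] <= `|Im Q.[z]| by rewrite -normrN ler_norm.
  split; [nra | nra | lra | lra].
have [m1 _] := @minprinc R H1 rho r w r0 rr hw (fun z hz => let: And4 a _ _ _ := reg z hz in a).
have [m2 _] := @minprinc R H2 rho r w r0 rr hw (fun z hz => let: And4 _ a _ _ := reg z hz in a).
have [_ m3] := @minprinc R H3 rho r w r0 rr hw
  (fun z hz => let: And4 _ _ a _ := reg z hz in ltW a).
have [_ m4] := @minprinc R H4 rho r w r0 rr hw
  (fun z hz => let: And4 _ _ _ a := reg z hz in ltW a).
have {}m3 := m3 (fun z hz => let: And4 _ _ a _ := reg z hz in a).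
have {}m4 := m4 (fun z hz => let: And4 _ _ _ a := reg z hz in a).
rewrite E1 in m1; rewrite E2 in m2; rewrite E3 in m3; rewrite E4 in m4.
split; last by split; lra.
rewrite -/k.
case: (lerP 0 (Im Q.[w])) => hi.
  by rewrite ger0_norm //; lra.
by rewrite ltr0_norm //; nra.
Qed.
End Core5.


Lemma QE (R : realType) (n : nat) (a : 'I_n -> R) (u : R[i]) : u != 0 ->
  p_a a u / u ^+ n = (1 + \sum_(i < n) (a i)%:C%C *: 'X^(i.+1)).[u^-1].
Proof.
move=> u0.
rewrite /p_a hornerD hornerC horner_sum mulrDl divff ?expf_neq0 //.
congr (1 + _); rewrite mulr_suml; apply: eq_bigr => i _.
rewrite hornerZ hornerXn -mulrA; congr (_ * _).
have e : u ^+ n = u ^+ (n - i.+1) * u ^+ i.+1 by rewrite -exprD subnK.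
by rewrite e invfM mulrA mulfV ?expf_neq0 // mul1r exprVn.
Qed.

Theorem lemma4p3 (R : realType) (tau0 tau1 tau2 : R) (n : nat) (alpha beta : R) :
  0 < tau0 -> 0 < tau1 -> 0 < tau2 -> 0 < alpha -> alpha < beta ->
  forall a : 'I_n -> R,
    B_alpha tau0 tau1 tau2 alpha a -> B_alpha tau0 tau1 tau2 beta a.
Proof.
move=> t0 t1 t2 al ab a hB z hz.
have b0 : 0 < beta by lra.
have nz0 (v : R[i]) (s : R) : 0 < s -> `|v| = s%:C%C -> v != 0.
  move=> s0 hv; apply/negP => /eqP v0; move: hv; rewrite v0 normr0 => /eqP.
  by rewrite eq_sym (inj_eq (@complexI R)) gt_eqF.
have z0 := nz0 z beta b0 hz.
rewrite QE //.
apply: (@transfer R tau0 tau1 tau2 _ (alpha^-1) (beta^-1)) => //.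
- by rewrite invr_gt0.
- by rewrite ltf_pV2.
- by rewrite normfV hz fmorphV.
move=> zeta hzeta.
have a0 : 0 < alpha^-1 by rewrite invr_gt0.
have zeta0 := nz0 zeta _ a0 hzeta.
have := hB zeta^-1 _.
rewrite QE ?invr_eq0 // invrK; apply.
by rewrite normfV hzeta fmorphV invrK.
Qed.
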